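(* Let $F_2$ be the free group on $\{x,y\}$ and let $\alpha$ be a Whitehead automorphism of $F_2$ of type (W2). Then exactly one of $\alpha \equiv 1$, $\alpha \equiv (\{x\}, y)$, $\alpha \equiv (\{x\}, y^{-1})$, $\alpha \equiv (\{y\}, x)$, $\alpha \equiv (\{y\}, x^{-1})$ holds.
   Context: Let $\Sigma=\{x,y\}$. A Whitehead automorphism of type (W2) is an automorphism $(S,a)$ determined by a set $S \subset \Sigma^{\pm 1}$ and a letter $a \in \Sigma^{\pm 1}$ with $a, a^{-1} \notin S$, acting on letters $c \in \Sigma^{\pm1}$ by: $c \mapsto ca$ if $c \in S$ and $c^{-1} \notin S$; $c \mapsto a^{-1}ca$ if $c, c^{-1} \in S$; $c \mapsto c$ if $c, c^{-1} \notin S$. A cyclic word is the set of all cyclic permutations of a cyclically reduced word; an automorphism acts on cyclic words by applying it to a representative and cyclically reducing. For automorphisms $\phi,\psi$, $\phi \equiv \psi$ means $\phi(w) = \psi(w)$ for every cyclic word $w$ in $F_2$. *)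

(* Defs.v *)
From mathcomp Require Import all_boot.
Set Implicit Arguments. Unset Strict Implicit. Unset Printing Implicit Defensive.

(* A letter of Sigma^{+-1}: (generator, inverted?) ; generator false = x, true = y *)
Definition letter : finType := (bool * bool)%type.
Definition lx : letter := (false, false).
Definition lxi : letter := (false, true).
Definition ly : letter := (true, false).
Definition lyi : letter := (true, true).
Definition linv (c : letter) : letter := (c.1, ~~ c.2).

Definition red (w : seq letter) : seq letter :=
  foldr (fun c acc => match acc with
                      | d :: t => if d == linv c then t else c :: acc
                      | [::] => [:: c] end) [::] w.

Definition reduced (w : seq letter) : bool := red w == w.

Definition cyc_reduced (w : seq letter) : bool :=
  reduced w && (if w is c :: t then last c t != linv c else true).

Definition cstrip (w : seq letter) : seq letter :=
  if w is c :: t then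
    if (1 <= size t) && (last c t == linv c) then take (size t).-1 t else w
  else w.

Definition cycred (w : seq letter) : seq letter :=
  let r := red w in iter (size r) cstrip r.

Definition endo := letter -> seq letter.

Definition cyc_image (f : endo) (w : seq letter) : seq letter :=
  cycred (flatten (map f w)).

(* equality of cyclic words = the representatives are cyclic permutations *)
Definition cyc_eq (u v : seq letter) : Prop := exists n, rot n u = v.

Definition aut_equiv (f g : endo) : Prop :=
  forall w, cyc_reduced w -> cyc_eq (cyc_image f w) (cyc_image g w).

Definition id_aut : endo := fun c => [:: c].

(* Whitehead automorphism (S, a) of type (W2); the case c \notin S,
   c^{-1} \in S is forced by the homomorphism property: c ↦ a^{-1} c *)
Definition whitehead2 (S : {set letter}) (a : letter) : endo := fun c =>
  if c \in S then
    (if linv c \in S then [:: linv a; c; a] else [:: c; a])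
  else
    (if linv c \in S then [:: linv a; c] else [:: c]).

Definition is_W2 (S : {set letter}) (a : letter) : Prop :=
  a \notin S /\ linv a \notin S.

Definition exactly_one5 (P1 P2 P3 P4 P5 : Prop) : Prop :=
  (P1 /\ ~ P2 /\ ~ P3 /\ ~ P4 /\ ~ P5) \/
  (~ P1 /\ P2 /\ ~ P3 /\ ~ P4 /\ ~ P5) \/
  (~ P1 /\ ~ P2 /\ P3 /\ ~ P4 /\ ~ P5) \/
  (~ P1 /\ ~ P2 /\ ~ P3 /\ P4 /\ ~ P5) \/
  (~ P1 /\ ~ P2 /\ ~ P3 /\ ~ P4 /\ P5).

(* Main.v *)
Require Import Defs.
From mathcomp Require Import all_boot.

Definition step (c : letter) (acc : seq letter) : seq letter :=
  match acc with
  | d :: t => if d == linv c then t else c :: acc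
  | [::] => [:: c] end.

Lemma redE w : red w = foldr step [::] w. Proof. by []. Qed.
Lemma red_cons c w : red (c :: w) = step c (red w). Proof. by []. Qed.
Lemma red_cat u v : red (u ++ v) = foldr step (red v) u.
Proof. by rewrite !redE foldr_cat. Qed.

Lemma linvK c : linv (linv c) = c.
Proof. by case: c => a b; rewrite /linv /= negbK. Qed.
Lemma linv_inj : injective linv.
Proof. exact: (can_inj linvK). Qed.
Lemma linv_neq c : (c == linv c) = false.
Proof. by case: c => a [] /=; rewrite /linv /= xpair_eqE eqxx. Qed.

Definition e (c d : letter) := d != linv c.
Definition sr := sorted e.

Lemma step_sr c s : sr s -> sr (step c s).
Proof.
case: s => [|d t] //= H.
case: ifP => E; first exact: (path_sorted H).
by rewrite /sr /= /e E.
Qed.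

Lemma step_cancel c s : sr s -> step c (step (linv c) s) = s.
Proof.
case: s => [|d t] /=; first by rewrite eqxx.
rewrite linvK => H.
case: eqP H => [->|Ne] H /=.
  case: t H => [|f t] //= /andP [Hf _].
  by rewrite /e in Hf; rewrite (negbTE Hf).
by rewrite eqxx.
Qed.

Lemma foldr_sr s u : sr s -> sr (foldr step s u).
Proof. by move=> H; elim: u => //= c u IH; apply: step_sr. Qed.

Lemma red_sr w : sr (red w).
Proof. by rewrite redE; apply: foldr_sr. Qed.

Lemma red_id w : sr w -> red w = w.
Proof.
elim: w => // c w IH H.
rewrite red_cons IH; last exact: (path_sorted H).
case: w H {IH} => //= d t /andP [Hd _].
by rewrite /e in Hd; rewrite (negbTE Hd).
Qed.

Lemma red_red w : red (red w) = red w.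
Proof. exact/red_id/red_sr. Qed.

Lemma R_step s c t : sr s -> foldr step s (step c t) = step c (foldr step s t).
Proof.
move=> Hs; case: t => [|d t] //=.
case: eqP => [->|//] /=.
by rewrite step_cancel //; apply: foldr_sr.
Qed.

Lemma R_red s u : sr s -> foldr step s (red u) = foldr step s u.
Proof.
move=> Hs; elim: u => //= c u IH.
by rewrite -IH -R_step.
Qed.

Lemma redA u v : red (u ++ v) = red (red u ++ red v).
Proof. by rewrite !red_cat red_red R_red //; apply: red_sr. Qed.

Lemma red_cancel_mid u b v : red (u ++ b :: linv b :: v) = red (u ++ v).
Proof.
by rewrite !red_cat !red_cons step_cancel //; apply: red_sr.
Qed.

Lemma red_mid u v s : red (u ++ v ++ s) = red (u ++ red v ++ s).
Proof.
by rewrite !red_cat R_red //; apply: red_sr.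
Qed.

Lemma conj_red (f g : endo) b :
  (forall c, red (f c) = red (linv b :: g c ++ [:: b])) ->
  forall w, red (flatten (map f w)) = red (linv b :: flatten (map g w) ++ [:: b]).
Proof.
move=> Hf; elim => [|c w IH].
  by rewrite /= linvK eqxx.
have -> : flatten (map f (c::w)) = f c ++ flatten (map f w) by [].
have -> : flatten (map g (c::w)) = g c ++ flatten (map g w) by [].
rewrite redA Hf IH -redA.
rewrite -cat_cons -catA cat_cons -catA.
rewrite (_ : [:: b] ++ linv b :: _ = b :: linv b :: (flatten (map g w) ++ [:: b])) //.
rewrite -cat_cons red_cancel_mid.
by rewrite cat_cons catA.
Qed.

Lemma eq_red (f g : endo) :
  (forall c, red (f c) = red (g c)) ->
  forall w, red (flatten (map f w)) = red (flatten (map g w)).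
Proof.
move=> Hf; elim => [|c w IH] //.
have -> : flatten (map f (c::w)) = f c ++ flatten (map f w) by [].
have -> : flatten (map g (c::w)) = g c ++ flatten (map g w) by [].
by rewrite redA Hf IH -redA.
Qed.

Definition cyc r := iter (size r) cstrip r.
Lemma cycredE u : cycred u = cyc (red u). Proof. by []. Qed.

Lemma cstrip_size r : cstrip r = r \/ (size (cstrip r)).+2 = size r.
Proof.
case: r => [|c t] /=; first by left.
case: ifP => [/andP [H _]|]; last by left.
right; rewrite size_take.
case: t H => //= d t _.
by rewrite ltnSn.
Qed.

Lemma iter_stab r n : cstrip r = r -> iter n cstrip r = r.
Proof. by move=> H; elim: n => //= n ->. Qed.

Lemma iter_cyc_aux k r : size r <= k -> forall n, size r <= n ->
  iter n cstrip r = iter (size r) cstrip r.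
Proof.
elim: k r => [|k IH] r Hk n Hn.
  move: Hk; rewrite leqn0 => /eqP Hr.
  have E : cstrip r = r by move: Hr; clear; case: r.
  by rewrite !iter_stab.
case: (cstrip_size r) => [E|E]; first by rewrite !iter_stab.
have H m : size r <= m -> iter m cstrip r = iter (size (cstrip r)) cstrip (cstrip r).
  case: m => [|m] Hm; first by move: Hm; rewrite -E.
  rewrite iterSr IH //.
    by move: Hk; rewrite -E ltnS => /ltnW.
  by move: Hm; rewrite -E ltnS => /ltnW.
by rewrite (H n Hn) (H (size r) (leqnn _)).
Qed.

Lemma iter_cyc n r : size r <= n -> iter n cstrip r = cyc r.
Proof. by move=> H; rewrite /cyc (@iter_cyc_aux (size r) r (leqnn _) n H). Qed.

Lemma cstrip_le r : size (cstrip r) <= size r.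
Proof. by case: (cstrip_size r) => [->|<-] //; rewrite leqW. Qed.

Lemma cyc_strip r : cyc r = cyc (cstrip r).
Proof.
rewrite -(@iter_cyc (size r).+1 r) // iterSr iter_cyc //.
exact: cstrip_le.
Qed.

Lemma cyc_fix r : cstrip r = r -> cyc r = r.
Proof. by move=> H; rewrite /cyc iter_stab. Qed.

Lemma sr_rcons2 s x y : sr (rcons s x) -> e x y -> sr (rcons (rcons s x) y).
Proof.
case: s => [|c t] /=; first by move=> _ ->.
by rewrite /sr /= !rcons_path last_rcons => -> ->.
Qed.

Lemma sr_rconsW s x : sr (rcons s x) -> sr s.
Proof.
case: s => [|c t] //=.
by rewrite /sr /= rcons_path => /andP [].
Qed.

Lemma e_linv x y : x != linv y -> e x y.
Proof.
move=> H; rewrite /e; apply/eqP => E; move/eqP: H; apply.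
by rewrite E linvK.
Qed.

Lemma cstrip_fix c t : last c t != linv c -> cstrip (c :: t) = c :: t.
Proof. by move=> H /=; rewrite (negbTE H) andbF. Qed.

Lemma lemC r b : sr r ->
  exists n, rot n (cyc (red (linv b :: r ++ [:: b]))) = cyc r.
Proof.
case/lastP: r => [|r0 d] Hr.
  by exists 0; rewrite /= linvK eqxx.
have Hr0 := @sr_rconsW _ _ Hr.
case: (eqVneq d (linv b)) => [Ed|Nd].
  subst d.
  have -> : linv b :: rcons r0 (linv b) ++ [:: b]
          = (linv b :: r0) ++ linv b :: linv (linv b) :: [::]
    by rewrite linvK -cats1 -catA.
  rewrite red_cancel_mid cats0 red_cons (@red_id _ Hr0).
  case: r0 Hr Hr0 => [|c t0] Hr Hr0; first by exists 0.
  rewrite /= linvK; case: eqP => [Ec|Nc].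
    subst c; exists 0; rewrite rot0 [RHS]cyc_strip /=.
    rewrite size_rcons last_rcons eqxx /= -cats1 take_size_cat //.
  have Hl : last c t0 != b.
    move: Hr; rewrite /sr /= rcons_path => /andP [_].
    rewrite /e; apply: contra => /eqP ->; by [].
  exists 1.
  rewrite cyc_fix; last by apply: cstrip_fix; rewrite /= linvK.
  rewrite [RHS]cyc_fix ?rot1_cons //; apply: cstrip_fix; rewrite last_rcons.
  by apply/eqP => /linv_inj E; apply: Nc.
have Hs := @sr_rcons2 _ _ _ Hr (@e_linv _ _ Nd).
rewrite red_cons cats1 (@red_id _ Hs).
case Er: (rcons r0 d) Hr Hs => [|c t] Hr Hs.
  by move: (size_rcons r0 d); rewrite Er.
have Hl : last c t = d by rewrite -[last c t]/(last d (c :: t)) -Er last_rcons.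
rewrite /= linvK; case: eqP => [Ec|Nc].
  subst c.
  have Cr : cyc (b :: t) = b :: t by apply/cyc_fix/cstrip_fix; rewrite Hl.
  have Cr' : cyc (rcons t b) = rcons t b.
    apply: cyc_fix; case: t Hr {Hs Hl Cr Er} => [|f t] //= Hr.
    rewrite last_rcons; move: Hr; rewrite /sr /= => /andP [Hf _].
    have : b != linv f by apply/eqP => E; move/eqP: Hf; apply; rewrite E linvK.
    by move/negbTE => ->; rewrite andbF.
  rewrite Cr Cr'; exists (size (rcons t b) - 1).
  by rewrite -/(rotr 1 (rcons t b)) rotr1_rcons.
exists 0; rewrite rot0 [LHS]cyc_strip /=.
rewrite size_rcons last_rcons linvK eqxx /= -cats1 take_size_cat //.
Qed.

Lemma conj_equiv (f g : endo) b :
  (forall c, red (f c) = red (linv b :: g c ++ [:: b])) -> aut_equiv f g.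
Proof.
move=> H w _; rewrite /cyc_eq /cyc_image !cycredE (@conj_red _ _ _ H).
rewrite (red_mid [:: linv b]) /=.
exact: lemC (red_sr _).
Qed.

Lemma eq_equiv (f g : endo) :
  (forall c, red (f c) = red (g c)) -> aut_equiv f g.
Proof.
by move=> H w _; rewrite /cyc_eq /cyc_image !cycredE (@eq_red _ _ H); exists 0; rewrite rot0.
Qed.

Lemma cyc_perm u v : cyc_eq u v -> perm_eq u v.
Proof. by case=> n <-; rewrite perm_sym perm_rot. Qed.

Lemma sep f g h : aut_equiv f g -> aut_equiv f h ->
  perm_eq (cyc_image g [:: lx]) (cyc_image h [:: lx]) &&
  perm_eq (cyc_image g [:: ly]) (cyc_image h [:: ly]).
Proof.
move=> H1 H2.
have Cx : cyc_reduced [:: lx] by [].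
have Cy : cyc_reduced [:: ly] by [].
apply/andP; split.
  have A := @cyc_perm _ _ (H1 _ Cx); have B := @cyc_perm _ _ (H2 _ Cx).
  by rewrite perm_sym in A; apply: perm_trans A B.
have A := @cyc_perm _ _ (H1 _ Cy); have B := @cyc_perm _ _ (H2 _ Cy).
by rewrite perm_sym in A; apply: perm_trans A B.
Qed.

Ltac nsep H := let H' := fresh in move=> H'; move: (@sep _ _ _ H H');
  rewrite /cyc_image /= /whitehead2 !inE; vm_compute; done.

Section Ex.
Variable f : endo.
Let P1 := aut_equiv f id_aut.
Let P2 := aut_equiv f (whitehead2 [set lx] ly).
Let P3 := aut_equiv f (whitehead2 [set lx] lyi).
Let P4 := aut_equiv f (whitehead2 [set ly] lx).
Let P5 := aut_equiv f (whitehead2 [set ly] lxi).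

Lemma ex1 : P1 -> exactly_one5 P1 P2 P3 P4 P5.
Proof. by move=> H; left; do !split => //; nsep H. Qed.
Lemma ex2 : P2 -> exactly_one5 P1 P2 P3 P4 P5.
Proof. by move=> H; right; left; do !split => //; nsep H. Qed.
Lemma ex3 : P3 -> exactly_one5 P1 P2 P3 P4 P5.
Proof. by move=> H; right; right; left; do !split => //; nsep H. Qed.
Lemma ex4 : P4 -> exactly_one5 P1 P2 P3 P4 P5.
Proof. by move=> H; right; right; right; left; do !split => //; nsep H. Qed.
Lemma ex5 : P5 -> exactly_one5 P1 P2 P3 P4 P5.
Proof. by move=> H; right; right; right; right; do !split => //; nsep H. Qed.
End Ex.

Ltac side Hp Hq Ha1 Ha2 := move=> -[[] []]; rewrite /whitehead2 /= ?inE ?Hp ?Hq ?Ha1 ?Ha2 /=;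
  vm_compute; reflexivity.
Ltac eqv Hp Hq Ha1 Ha2 := first [ apply: eq_equiv; side Hp Hq Ha1 Ha2
  | apply: (@conj_equiv _ _ lx); side Hp Hq Ha1 Ha2 | apply: (@conj_equiv _ _ lxi); side Hp Hq Ha1 Ha2
  | apply: (@conj_equiv _ _ ly); side Hp Hq Ha1 Ha2 | apply: (@conj_equiv _ _ lyi); side Hp Hq Ha1 Ha2 ].
Ltac fin Hp Hq Ha1 Ha2 := first [ apply: ex1; eqv Hp Hq Ha1 Ha2 | apply: ex2; eqv Hp Hq Ha1 Ha2 | apply: ex3; eqv Hp Hq Ha1 Ha2
  | apply: ex4; eqv Hp Hq Ha1 Ha2 | apply: ex5; eqv Hp Hq Ha1 Ha2 ].

Theorem lemma2p1 (S : {set letter}) (a : letter) :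
  is_W2 S a ->
  exactly_one5
    (aut_equiv (whitehead2 S a) id_aut)
    (aut_equiv (whitehead2 S a) (whitehead2 [set lx] ly))
    (aut_equiv (whitehead2 S a) (whitehead2 [set lx] lyi))
    (aut_equiv (whitehead2 S a) (whitehead2 [set ly] lx))
    (aut_equiv (whitehead2 S a) (whitehead2 [set ly] lxi)).
Proof.
case=> Ha1 Ha2; move/negbTE: Ha1 => Ha1; move/negbTE: Ha2 => Ha2.
case: a Ha1 Ha2 => [[] []] /= Ha1 Ha2.
- case Hp: ((false,false) \in S); case Hq: ((false,true) \in S); fin Hp Hq Ha1 Ha2.
- case Hp: ((false,false) \in S); case Hq: ((false,true) \in S); fin Hp Hq Ha1 Ha2.
- case Hp: ((true,false) \in S); case Hq: ((true,true) \in S); fin Hp Hq Ha1 Ha2.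
- case Hp: ((true,false) \in S); case Hq: ((true,true) \in S); fin Hp Hq Ha1 Ha2.
Qed.
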